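(* Let $\mathcal X\subseteq\mathbb R^n$, $\bm c\in\mathbb R^n$, $\varepsilon\in(0,1)$, scenarios $\bm\xi^1,\dots,\bm\xi^N$ with probabilities $p_i\ge0$, $\sum_ip_i=1$, and $g(\bm x,\bm\xi)=\max_{j\in[J]}g_j(\bm x,\bm\xi)$. Let $\bm x^*$ be an optimal solution of $$v^*=\min_{\bm x\in\mathcal X}\Big\{\bm c^\top\bm x:\ \sum_{i=1}^Np_i\mathbb I[g(\bm x,\bm\xi^i)\le0]\ge1-\varepsilon\Big\},$$ and define $I^*=\{i\in[N]: g(\bm x^*,\bm\xi^i)\le0\}$. Suppose either (A) $\sum_{i\in[N]:\,g(\bm x^*,\bm\xi^i)<0}p_i>1-\varepsilon$; or (B) $\mathcal X$ is convex, $g(\cdot,\bm\xi^i)$ is convex for all $i\in I^*$, and there exists $\bar I\subseteq I^*$ such that for each $i\in\bar I$ there is $\bm x^i\in\mathcal X$ with $g(\bm x^i,\bm\xi^{i'})\le0$ for all $i'\in I^*$ and $g(\bm x^i,\bm\xi^i)<0$, and $\sum_{i\in\bar I}p_i>1-\varepsilon$. Then $$v^*=\inf\big\{v^{\mathrm{CVaR}}(\bm\alpha):\ \alpha_i=1,\ i\in[N]\setminus I^*,\ \ \alpha_i\ge1,\ i\in I^*\big\}.$$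
   Context: $\mathbb I[\cdot]$ is the indicator function. For $\bm\alpha\ge\bm e$ (all-ones vector), $v^{\mathrm{CVaR}}(\bm\alpha)=\min_{\bm x\in\mathcal X,\beta\le0,\bm s\ge\bm0}\{\bm c^\top\bm x:\ \varepsilon\beta+\sum_ip_is_i\le0,\ s_i+\beta\ge\alpha_ig(\bm x,\bm\xi^i),\ i\in[N]\}$, with value $+\infty$ if infeasible. *)

(* Defs.v *)
From HB Require Import structures.
From mathcomp Require Import all_boot all_order all_algebra.
From mathcomp Require Import all_classical all_reals.
From mathcomp Require Import ereal.
Set Implicit Arguments. Unset Strict Implicit. Unset Printing Implicit Defensive.
Import Order.TTheory GRing.Theory Num.Theory.
Local Open Scope ring_scope.
Local Open Scope classical_set_scope.

Section Defs.
Variable R : realType.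

Definition dotp (n : nat) (c x : 'rV[R]_n) : R := \sum_(k < n) c 0 k * x 0 k.

Definition convex_set (n : nat) (X : set 'rV[R]_n) : Prop :=
  forall x y t, X x -> X y -> 0 <= t <= 1 -> X ((1 - t) *: x + t *: y).

Definition convex_fun (n : nat) (f : 'rV[R]_n -> R) : Prop :=
  forall x y t, 0 <= t <= 1 ->
    f ((1 - t) *: x + t *: y) <= (1 - t) * f x + t * f y.

Definition gmax (n J : nat) (T : Type) (hJ : (0 < J)%N)
  (gj : 'I_J -> 'rV[R]_n -> T -> R) (x : 'rV[R]_n) (xi : T) : R :=
  \big[Num.max/gj (Ordinal hJ) x xi]_(j < J) gj j x xi.

Definition cc_feasible (n N : nat) (T : Type) (X : set 'rV[R]_n)
  (eps : R) (p : 'I_N -> R) (xi : 'I_N -> T) (g : 'rV[R]_n -> T -> R)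
  (x : 'rV[R]_n) : Prop :=
  X x /\ 1 - eps <= \sum_(i < N) p i * ((g x (xi i) <= 0)%R : bool)%:R.

(* v^CVaR(alpha); ereal_inf of the empty set is +oo *)
Definition vCVaR (n N : nat) (T : Type) (X : set 'rV[R]_n) (c : 'rV[R]_n)
  (eps : R) (p : 'I_N -> R) (xi : 'I_N -> T) (g : 'rV[R]_n -> T -> R)
  (alpha : 'I_N -> R) : \bar R :=
  ereal_inf [set (dotp c x)%:E | x in
    [set x | X x /\ exists (beta : R) (s : 'I_N -> R),
       [/\ beta <= 0, (forall i, 0 <= s i),
           eps * beta + \sum_(i < N) p i * s i <= 0 &
           (forall i, alpha i * g x (xi i) <= s i + beta)]]].

End Defs.

(* Main.v *)
Require Import Defs.
From HB Require Import structures.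
From mathcomp Require Import all_boot all_order all_algebra.
From mathcomp Require Import all_classical all_reals.
From mathcomp Require Import ereal.
From mathcomp Require Import ring lra.
Import Order.TTheory GRing.Theory Num.Theory.
Local Open Scope ring_scope.
Local Open Scope classical_set_scope.

Lemma cvar_cc (R : realType) (n N : nat) (T : Type) (X : set 'rV[R]_n)
  (eps : R) (xi : 'I_N -> T) (p : 'I_N -> R) (g : 'rV[R]_n -> T -> R)
  (heps : 0 < eps) (hp0 : forall i, 0 <= p i) (hp1 : \sum_(i < N) p i = 1)
  (alpha : 'I_N -> R) (ha : forall i, 1 <= alpha i) x beta (s : 'I_N -> R) :
  X x -> beta <= 0 -> (forall i, 0 <= s i) ->
  eps * beta + \sum_(i < N) p i * s i <= 0 ->
  (forall i, alpha i * g x (xi i) <= s i + beta) -> cc_feasible X eps p xi g x.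
Proof.
move=> Xx hb hs hsum hc; split => //.
set Q := \sum_(i < N) p i * ((0 < g x (xi i))%R : bool)%:R.
have hsplit : \sum_(i < N) p i * ((g x (xi i) <= 0)%R : bool)%:R = 1 - Q.
  transitivity (\sum_(i < N) p i - Q); last by rewrite hp1.
  rewrite /Q -sumrB; apply: eq_bigr => i _.
  by rewrite ltNge; case: (g x (xi i) <= 0); rewrite /= ?mulr1 ?mulr0 ?subr0 ?subrr.
rewrite hsplit.
have pos i : 0 < g x (xi i) -> - beta < s i.
  move=> gi; have := hc i; have : 0 < alpha i * g x (xi i).
    by apply: mulr_gt0 => //; apply: lt_le_trans (ha i).
  move=> h1 h2; lra.
suff : Q <= eps by move=> h; lra.
have hPs : 0 <= \sum_(i < N) p i * s i by apply: sumr_ge0 => i _; exact: mulr_ge0.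
have [bneg|bz] := ltP beta 0.
  have h1 : - beta * Q <= \sum_(i < N) p i * s i.
    rewrite /Q mulr_sumr; apply: ler_sum => i _.
    case: ltP => gi /=; last by rewrite mulr0 mulr0; exact: mulr_ge0.
    rewrite mulr1 mulrC; apply: ler_wpM2l => //; apply: ltW; exact: pos.
  have : - beta * Q <= - beta * eps by lra.
  by rewrite ler_pM2l ?oppr_gt0.
have b0 : beta = 0 by apply/eqP; rewrite eq_le hb bz.
have hP0 : \sum_(i < N) p i * s i = 0 by subst beta; lra.
have e0 := psumr_eq0P (fun i _ => mulr_ge0 (hp0 i) (hs i)) hP0.
have -> : Q = 0.
  rewrite /Q big1 // => i _; case: ltP => gi /=; last by rewrite mulr0.
  have si : 0 < s i by have := pos i gi; subst beta; rewrite oppr0.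
  have := e0 i isT; move/eqP; rewrite mulf_eq0 => /orP[/eqP -> | /eqP h]; first by rewrite mul0r.
  by rewrite h ltxx in si.
exact: ltW.
Qed.
Lemma feas_alpha (R : realType) (n N : nat) (T : Type) (X : set 'rV[R]_n)
  (c : 'rV[R]_n) (eps : R) (xi : 'I_N -> T) (p : 'I_N -> R) (g : 'rV[R]_n -> T -> R)
  (hp0 : forall i, 0 <= p i) (hp1 : \sum_(i < N) p i = 1)
  (S : pred 'I_N) x :
  X x -> (forall i, S i -> g x (xi i) < 0) -> 1 - eps < \sum_(i < N | S i) p i ->
  exists alpha : 'I_N -> R, (forall i, 1 <= alpha i /\ (~~ S i -> alpha i = 1)) /\
    (vCVaR X c eps p xi g alpha <= (dotp c x)%:E)%E.
Proof.
move=> Xx hS hP.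
set K := \sum_(i < N) p i * Num.max (g x (xi i)) 0.
set d := eps - (1 - \sum_(i < N | S i) p i).
have d0 : 0 < d by rewrite /d; lra.
have K0 : 0 <= K by apply: sumr_ge0 => i _; apply: mulr_ge0 => //; rewrite le_max lexx orbT.
set t := K / d.
have t0 : 0 <= t by apply: divr_ge0 => //; exact: ltW.
have td : t * d = K by rewrite /t divfK // gt_eqF.
exists (fun i => if S i then Num.max 1 (- t / g x (xi i)) else 1); split.
  by move=> i; case: (S i) => //=; split => //; rewrite le_max lexx.
apply: ereal_inf_lbound; exists x => //; split => //.
exists (- t), (fun i => if S i then 0 else Num.max (g x (xi i)) 0 + t); split.
- by rewrite oppr_le0.
- move=> i; case: (S i) => //; apply: addr_ge0 => //; rewrite le_max lexx orbT //.
- rewrite (bigID S) /=.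
  rewrite big1 => [|i ->]; last by rewrite mulr0.
  rewrite add0r.
  have -> : \sum_(i < N | ~~ S i) p i * (if S i then 0 else Num.max (g x (xi i)) 0 + t)
     = \sum_(i < N | ~~ S i) p i * Num.max (g x (xi i)) 0 + t * \sum_(i < N | ~~ S i) p i.
    rewrite mulr_sumr -big_split /=; apply: eq_bigr => i hi; rewrite (negbTE hi).
    by rewrite mulrDr [t * _]mulrC.
  move: td; rewrite /d.
  set PS := \sum_(i < N | S i) p i.
  set PN := \sum_(i < N | ~~ S i) p i.
  set A := \sum_(i < N | ~~ S i) p i * Num.max (g x (xi i)) 0.
  set B := \sum_(i < N | S i) p i * Num.max (g x (xi i)) 0.
  move=> td.
  have hK : K = B + A by rewrite /K /A /B (bigID S).
  have hK1 : 0 <= B.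
    by apply: sumr_ge0 => i _; apply: mulr_ge0 => //; rewrite le_max lexx orbT.
  have h1 : 1 = PS + PN by rewrite -hp1 /PS /PN (bigID S).
  have -> : PN = 1 - PS by lra.
  have : t * eps - t + t * PS = K by rewrite -td; ring.
  lra.
- move=> i; case hi: (S i).
  + rewrite add0r; have gi := hS i hi.
    have : Num.max 1 (- t / g x (xi i)) * g x (xi i) <= (- t / g x (xi i)) * g x (xi i).
      by rewrite ler_nM2r // le_max lexx orbT.
    by rewrite divfK // lt_eqF.
  + rewrite mul1r addrK le_max lexx //.
Qed.

Lemma dotp_comb (R : realType) (n : nat) (c x y : 'rV[R]_n) (l : R) :
  dotp c ((1 - l) *: x + l *: y) = (1 - l) * dotp c x + l * dotp c y.
Proof.
rewrite /dotp !mulr_sumr -big_split; apply: eq_bigr => k _; rewrite !mxE /=; ring.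
Qed.

Lemma chain (R : realType) (n N : nat) (X : set 'rV[R]_n)
  (f : 'I_N -> 'rV[R]_n -> R) (Istar : 'I_N -> bool) x0 :
  convex_set X -> (forall i, Istar i -> convex_fun (f i)) -> X x0 ->
  (forall i, Istar i -> f i x0 <= 0) ->
  forall s : seq 'I_N,
  (forall i, i \in s -> exists z, [/\ X z, (forall i', Istar i' -> f i' z <= 0) & f i z < 0]) ->
  (forall i, i \in s -> Istar i) ->
  exists y, [/\ X y, (forall i', Istar i' -> f i' y <= 0) & (forall i, i \in s -> f i y < 0)].
Proof.
move=> cX cf X0 f0; elim => [|a s IH] hz hI.
  by exists x0; split => // i; rewrite in_nil.
have [y [Xy fy ys]] : exists y, [/\ X y, (forall i', Istar i' -> f i' y <= 0) & (forall i, i \in s -> f i y < 0)].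
  apply: IH => i hi; [apply: hz | apply: hI]; by rewrite inE hi orbT.
have [z [Xz fz za]] := hz a (mem_head _ _).
have t01 : 0 <= (2^-1 : R) <= 1 by apply/andP; split; lra.
exists ((1 - 2^-1) *: y + 2^-1 *: z); split.
- exact: cX.
- move=> i' hi'; have := cf i' hi' y z (2^-1) t01; have := fy i' hi'; have := fz i' hi'; lra.
- move=> i; rewrite inE => /orP[/eqP -> | hi].
    have ha := hI a (mem_head _ _).
    have := cf a ha y z (2^-1) t01; have := fy a ha; lra.
  have hi' : Istar i by apply: hI; rewrite inE hi orbT.
  have := cf i hi' y z (2^-1) t01; have := ys i hi; have := fz i hi'; lra.
Qed.

Theorem corollary3 (R : realType) (n N J : nat) (T : Type)
  (X : set 'rV[R]_n) (c : 'rV[R]_n) (eps : R) (heps : 0 < eps < 1)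
  (xi : 'I_N -> T) (p : 'I_N -> R) (hp0 : forall i, 0 <= p i)
  (hp1 : \sum_(i < N) p i = 1)
  (hJ : (0 < J)%N) (gj : 'I_J -> 'rV[R]_n -> T -> R)
  (xstar : 'rV[R]_n)
  (hxfeas : cc_feasible X eps p xi (gmax hJ gj) xstar)
  (hxopt : forall x, cc_feasible X eps p xi (gmax hJ gj) x ->
             dotp c xstar <= dotp c x) :
  let g := gmax hJ gj in
  let Istar := fun i : 'I_N => g xstar (xi i) <= 0 in
  (1 - eps < \sum_(i < N | g xstar (xi i) < 0) p i) \/
  (convex_set X /\
   (forall i, Istar i -> convex_fun (fun x => g x (xi i))) /\
   exists Ibar : {set 'I_N},
     (forall i, i \in Ibar -> Istar i) /\
     (forall i, i \in Ibar -> exists xi_ : 'rV[R]_n,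
        [/\ X xi_, (forall i', Istar i' -> g xi_ (xi i') <= 0) &
            g xi_ (xi i) < 0]) /\
     1 - eps < \sum_(i in Ibar) p i) ->
  (dotp c xstar)%:E =
    ereal_inf [set vCVaR X c eps p xi g alpha | alpha in
      [set alpha : 'I_N -> R | forall i,
         (Istar i -> 1 <= alpha i) /\ (~ Istar i -> alpha i = 1)]].
Proof.
move=> g Istar H.
have [eps0 eps1] : 0 < eps /\ eps < 1 by apply/andP.
have Xs : X xstar by case: hxfeas.
set L := ereal_inf _.
have lower : ((dotp c xstar)%:E <= L)%E.
  apply: le_ereal_inf_tmp => _ [alpha ha <-].
  apply: le_ereal_inf_tmp => _ [x [Xx [beta [s [hb hs hsum hc]]]] <-].
  rewrite lee_fin; apply: hxopt.
  apply: (@cvar_cc R n N T X eps xi p g eps0 hp0 hp1 alpha _ x beta s) => //.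
  move=> i; have [h1 h2] := ha i.
  case: (boolP (Istar i)) => hi; first exact: h1.
  by rewrite h2 //; apply/negP.
have upper : forall x (S : pred 'I_N), X x -> (forall i, S i -> g x (xi i) < 0) ->
    (forall i, S i -> Istar i) -> 1 - eps < \sum_(i < N | S i) p i ->
    (L <= (dotp c x)%:E)%E.
  move=> x S Xx hS hSI hP.
  have [alpha [ha hv]] := @feas_alpha R n N T X c eps xi p g hp0 hp1 S x Xx hS hP.
  apply: le_trans hv; apply: ereal_inf_lbound; exists alpha => // i; split.
    by move=> _; case: (ha i).
  move=> nI; apply: (ha i).2; apply/negP => Si; apply: nI; exact: hSI.
case: H => [hA | [cX [cf [Ibar [hIb [hpts hP]]]]]].
  apply: le_anti; rewrite lower /=.
  apply: (upper xstar (fun i => g xstar (xi i) < 0)) => // i; exact: ltW.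
have [y [Xy fy ys]] := @chain R n N X (fun i x => g x (xi i)) Istar xstar cX cf Xs
  (fun i hi => hi) (enum Ibar)
  (fun i hi => hpts i ltac:(by rewrite mem_enum in hi))
  (fun i hi => hIb i ltac:(by rewrite mem_enum in hi)).
set D := dotp c y - dotp c xstar.
have Lle : forall l, 0 < l <= 1 -> (L <= (dotp c xstar + l * D)%:E)%E.
  move=> l /andP[l0 l1].
  have -> : dotp c xstar + l * D = dotp c ((1 - l) *: xstar + l *: y).
    by rewrite dotp_comb /D; ring.
  apply: (upper _ (fun i => i \in Ibar)) => //.
  - by apply: cX => //; apply/andP; split; lra.
  - move=> i hi; have hI := hIb i hi.
    have := cf i hI xstar y l (ltac:(apply/andP; split; lra)).
    have := ys i ltac:(by rewrite mem_enum).
    have : g xstar (xi i) <= 0 := hI.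
    nra.
clear upper; clearbody L; move: L lower Lle => [r| |] lower Lle.
- rewrite lee_fin in lower; congr EFin; apply: le_anti; rewrite lower /=.
  apply/ler_addgt0Pr => e e0.
  set q := e / (`|D| + 1).
  have hq : q * (`|D| + 1) = e by rewrite /q divfK // gt_eqF // ltr_wpDl.
  have q0 : 0 < q by rewrite /q divr_gt0 // ltr_wpDl.
  set l := Num.min 1 q.
  have l0 : 0 < l by rewrite /l lt_min ltr01 q0.
  have l1 : l <= 1 by rewrite /l ge_min lexx.
  have lq : l <= q by rewrite /l ge_min lexx orbT.
  have := Lle l (ltac:(apply/andP; split => //)); rewrite lee_fin => h.
  have hD : D <= `|D| by exact: ler_norm.
  have hD0 : 0 <= `|D| by [].
  nra.
- by have := Lle 1 (ltac:(apply/andP; split; lra)).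
- by [].
Qed.
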